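(* Let $\mathcal{S} \subseteq M_n$ be a quantum graph. Then $\mathcal{S}$ is connected if and only if the classical graph $C_v(\mathcal{S})$ is connected for every orthonormal basis $v=(|v_k\rangle)_{k=1}^n$ of $\mathbb{C}^n$.
   Context: $M_n$ denotes the $n\times n$ complex matrices. A quantum graph on $M_n$ is a linear subspace $\mathcal{S}\subseteq M_n$ closed under adjoints and containing $I_n$; it is connected if $\mathcal{S}^m=M_n$ for some $m\in\mathbb{N}$, where $\mathcal{S}^1=\mathcal{S}$ and $\mathcal{S}^{k+1}=\operatorname{span}\{AB: A\in\mathcal{S}^k, B\in\mathcal{S}\}$. For an ordered orthonormal basis $v=(|v_k\rangle)_{k=1}^n$ of $\mathbb{C}^n$, the confusability graph $C_v(\mathcal{S})$ is the classical graph on vertex set $\{1,\dots,n\}$ in which distinct $i,j$ are adjacent exactly when $\langle v_i|A|v_j\rangle\neq0$ for some $A\in\mathcal{S}$. *)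

(* Defs.v *)
From HB Require Import structures.
From mathcomp Require Import all_boot all_order all_algebra all_field.
From mathcomp Require Import reals.
From mathcomp Require Import complex.
From Stdlib Require Import Relations.Relation_Operators.
Set Implicit Arguments. Unset Strict Implicit. Unset Printing Implicit Defensive.
Import Order.TTheory GRing.Theory Num.Theory.
Local Open Scope ring_scope.

Definition adjmx (C : numClosedFieldType) m n (A : 'M[C]_(m, n)) : 'M[C]_(n, m) :=
  (map_mx Num.conj A)^T.

(* Quantum graph on M_n (here M_{n+1}, n+1 >= 1): a subspace closed under
   adjoints containing the identity. *)
Definition quantum_graph (C : numClosedFieldType) n (S : {vspace 'M[C]_n.+1}) : Prop :=
  (1%:M \in S) /\ (forall A, A \in S -> adjmx A \in S).

(* S^m = span{A B : A in S^(m-1), B in S}, S^1 = S  (falgebra's expv). *)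
Definition qconnected (C : numClosedFieldType) n (S : {vspace 'M[C]_n.+1}) : Prop :=
  exists m : nat, (0 < m)%N /\ (S ^+ m)%VS = fullv.

Definition orthonormal_basis (C : numClosedFieldType) k (v : 'I_k -> 'cV[C]_k) : Prop :=
  forall i j, adjmx (v i) *m v j = ((i == j)%:R)%:M.

Definition braket (C : numClosedFieldType) k (v : 'I_k -> 'cV[C]_k) (A : 'M[C]_k) i j : C :=
  (adjmx (v i) *m A *m v j) 0 0.

Definition conf_adj (C : numClosedFieldType) n (S : {vspace 'M[C]_n.+1})
    (v : 'I_n.+1 -> 'cV[C]_n.+1) (i j : 'I_n.+1) : Prop :=
  i <> j /\ exists A, A \in S /\ braket v A i j <> 0.

Definition graph_connected (V : Type) (adj : V -> V -> Prop) : Prop :=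
  forall x y : V, clos_refl_trans V adj x y.

(* Main.v *)
Require Import Defs.
From HB Require Import structures.
From mathcomp Require Import all_boot all_order all_algebra all_field.
From mathcomp Require Import reals complex.
From Stdlib Require Import Relations.Relation_Operators Classical.
Import Order.TTheory GRing.Theory Num.Theory.
Local Open Scope ring_scope.


Section Burnside.
Variables (C : numClosedFieldType) (n : nat) (A : {vspace 'M[C]_n.+1}).
Hypothesis A1 : 1 \in A.
Hypothesis AA : (A * A <= A)%VS.
Hypothesis irr : forall m (U : 'M[C]_(m, n.+1)),
  (forall a, a \in A -> stablemx U a) -> U = 0 \/ row_full U.

Lemma memA_mul a b : a \in A -> b \in A -> a *m b \in A.
Proof. by move=> Ha Hb; rewrite mulmxE (subvP AA) // memv_mul. Qed.

Let bA k := (vbasis A)`_k.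
Lemma bA_mem (k : 'I_(\dim A)) : bA k \in A.
Proof. by rewrite vbasis_mem // memt_nth. Qed.

Lemma row_trans (x : 'rV[C]_n.+1) : x != 0 -> forall y, exists2 a, a \in A & x *m a = y.
Proof.
move=> x0 y.
pose Q := \matrix_(k < \dim A) (x *m bA k).
have key : forall a, a \in A -> (x *m a <= Q)%MS.
  move=> a /coord_vbasis ->; rewrite mulmx_sumr; apply: summx_sub => k _.
  by rewrite -scalemxAr scalemx_sub // -(rowK (fun k => x *m bA k)) row_sub.
have stab : forall a, a \in A -> stablemx Q a.
  move=> a Ha; apply/row_subP => k; rewrite row_mul rowK -mulmxA.
  by apply: key; apply: memA_mul => //; apply: bA_mem.
have xQ : (x <= Q)%MS by rewrite -[x]mulmx1 key.
have [Q0|Qf] := irr _ _ stab.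
  by move: xQ; rewrite Q0 => /submx0null x00; rewrite x00 eqxx in x0.
have /submxP[c ->] : (y <= Q)%MS by rewrite submx_full.
exists (\sum_k c 0 k *: bA k).
  by apply: memv_suml => k _; rewrite memvZ // bA_mem.
rewrite [RHS]mulmx_sum_row mulmx_sumr; apply: eq_bigr => k _.
by rewrite rowK scalemxAr.
Qed.

Lemma col_trans (p : 'cV[C]_n.+1) : p != 0 -> forall y, exists2 a, a \in A & a *m p = y.
Proof.
move=> p0 y.
pose P := \matrix_(i < n.+1, k < \dim A) (bA k *m p) i 0.
have colPk k : col k P = bA k *m p by apply/colP => i; rewrite !mxE.
have stab : forall a, a \in A -> stablemx (kermx P) a.
  move=> a Ha; apply/sub_kermxP; apply/matrixP => i k.
  have := coord_vbasis (memA_mul _ _ Ha (bA_mem k)).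
  rewrite -/bA => E.
  have cm (M : 'M[C]_n.+1) : M *m col k P = col k (M *m P) by rewrite !colE mulmxA.
  have -> : (kermx P *m a *m P) i k = (kermx P *m (a *m col k P)) i 0.
    by rewrite mulmxA cm [RHS]mxE.
  rewrite colPk mulmxA E mulmx_suml mulmx_sumr summxE big1 ?mxE // => l _.
  rewrite -scalemxAl -scalemxAr mxE -colPk.
  have cm2 : kermx P *m col l P = col l (kermx P *m P) by rewrite !colE mulmxA.
  by rewrite cm2 mulmx_ker !mxE mulr0.
have [K0|Kf] := irr _ _ stab.
  have Pf : row_full P^T.
    rewrite /row_full mxrank_tr; have := mxrank_ker P; rewrite K0 mxrank0.
    have := rank_leq_row P; move=> h1 h2; apply/eqP.
    by apply/eqP; rewrite eqn_leq h1 /= -subn_eq0 -h2.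
  have /submxP[c Hc] : (y^T <= P^T)%MS by rewrite submx_full.
  have {Hc} Hc : y = P *m c^T by rewrite -[y]trmxK Hc trmx_mul !trmxK.
  exists (\sum_k c 0 k *: bA k).
    by apply: memv_suml => k _; rewrite memvZ // bA_mem.
  rewrite Hc mulmx_suml; apply/colP => i; rewrite summxE !mxE; apply: eq_bigr => k _.
  by rewrite -scalemxAl !mxE mulrC.
have : p = 0.
  have := sub1mx (kermx P); rewrite Kf => /sub_kermxP; rewrite mul1mx => P0.
  rewrite -[p]mul1mx -[1%:M]/(1 : 'M[C]_n.+1) (coord_vbasis A1) mulmx_suml big1 // => k _.
  by rewrite -scalemxAl -colPk P0; apply/colP => i; rewrite !mxE mulr0.
by move/eqP; rewrite (negbTE p0).
Qed.

Lemma rank_reduce (E : 'M[C]_n.+1) : E \in A -> E != 0 -> (1 < \rank E)%N ->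
  exists2 E', E' \in A & (E' != 0) && (\rank E' < \rank E)%N.
Proof.
move=> EA E0 r1.
set B := row_base E.
have Bf : row_free B by apply: row_base_free.
have BE : (B <= E)%MS by rewrite eq_row_base.
have EB : (E <= B)%MS by rewrite eq_row_base.
have r0 : (0 < \rank E)%N by apply: ltn_trans r1.
pose i0 : 'I_(\rank E) := Ordinal r0.
pose i1 : 'I_(\rank E) := Ordinal r1.
have b0E : (row i0 B <= E)%MS by apply: submx_trans (row_sub _ _) BE.
have b1E : (row i1 B <= E)%MS by apply: submx_trans (row_sub _ _) BE.
have b00 : row i0 B != 0 by rewrite rowE mulmx_free_eq0 //; apply/eqP => /rowP/(_ i0); rewrite !mxE !eqxx /= => /eqP; rewrite oner_eq0.
have [x0 Hx0] := submxP b0E.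
have [y1 Hy1] := submxP b1E.
have [a Ha Hba] := row_trans _ b00 y1.
pose M0 := B *m (a *m E) *m pinvmx B.
have [lam /eigenvalueP [w Hw w0]] := eigenvalue_closed M0 r0.
pose z := w *m B.
have z0 : z != 0 by rewrite /z mulmx_free_eq0.
have BaE : (B *m (a *m E) <= B)%MS by rewrite mulmxA (submx_trans _ EB) // submxMl.
have zf : z *m (a *m E) = lam *: z.
  rewrite /z scalemxAl -Hw /M0 -[w *m _ *m B]mulmxA (mulmxKpV BaE) mulmxA //.
pose f := a *m E - lam%:M.
exists (E *m f).
  rewrite /f mulmxBr mul_mx_scalar mulmxA; apply: rpredB; last by apply: rpredZ.
  by apply: memA_mul => //; apply: memA_mul.
apply/andP; split.
  apply/eqP => Ef0.
  have EaE : E *m a *m E = lam *: E.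
    by apply/eqP; rewrite -subr_eq0 -mul_mx_scalar -mulmxA -mulmxBr -/f Ef0.
  have Hb : row i1 B = lam *: row i0 B.
    by rewrite Hy1 -Hba Hx0 -mulmxA -mulmxA (mulmxA E) EaE -scalemxAr.
  pose d := delta_mx 0 i1 - lam *: delta_mx 0 i0 : 'rV[C]_(\rank E).
  have : d *m B == 0.
    by rewrite /d mulmxBl -scalemxAl -!rowE Hb subrr.
  rewrite mulmx_free_eq0 // => /eqP /rowP /(_ i1).
  by rewrite !mxE !eqxx /= mulr0 subr0 => /eqP; rewrite oner_eq0.
have Hz : (z <= E :&: kermx f)%MS.
  rewrite sub_capmx (submx_trans _ BE) ?submxMl //=.
  by apply/sub_kermxP; rewrite /f mulmxBr zf mul_mx_scalar subrr.
have := mxrank_mul_ker E f; have := mxrankS Hz.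
have : (0 < \rank z)%N by rewrite lt0n mxrank_eq0.
move=> h1 h2 h3; rewrite -h3.
have := leq_trans h1 h2; move: (\rank (E *m f)) (\rank (E :&: kermx f)) => u v.
by move=> hv; rewrite -addn1 leq_add2l.
Qed.

Lemma rank_one_exists : exists2 E, E \in A & (E != 0) && (\rank E == 1)%N.
Proof.
suff H : forall k (E : 'M[C]_n.+1), E \in A -> E != 0 -> (\rank E <= k)%N ->
  exists2 E, E \in A & (E != 0) && (\rank E == 1)%N.
  apply: (H n.+1 1%:M); first exact: A1; last exact: rank_leq_row.
  by apply/eqP => /matrixP /(_ 0 0); rewrite !mxE eqxx => /eqP; rewrite oner_eq0.
elim=> [|k IH] E EA E0 rk.
  by move: rk; rewrite leqn0 mxrank_eq0 (negbTE E0).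
case: (ltngtP (\rank E) 1) => [r0|r1|r1].
- by move: r0; rewrite ltnS leqn0 mxrank_eq0 (negbTE E0).
- have [E' E'A /andP[E'0 E'r]] := rank_reduce _ EA E0 r1.
  by apply: (IH E') => //; rewrite -ltnS (leq_trans E'r).
- by exists E => //; rewrite E0 r1.
Qed.

Theorem burnside : A = fullv.
Proof.
have [E EA /andP[E0 /eqP Er]] := rank_one_exists.
have EB : (E <= row_base E)%MS by rewrite eq_row_base.
have := mulmxKpV EB; move: (row_base E) (E *m pinvmx (row_base E)) EB.
rewrite Er => B X _ HXB.
have X0 : X != 0 by apply: contraNneq E0 => X0; rewrite -HXB X0 mul0mx.
have B0 : B != 0 by apply: contraNneq E0 => B0; rewrite -HXB B0 mulmx0.
have Hd : forall i j, delta_mx i j \in A.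
  move=> i j.
  have [a Ha HaX] := col_trans _ X0 (delta_mx i 0).
  have [b Hb HBb] := row_trans _ B0 (delta_mx 0 j).
  have -> : delta_mx i j = a *m E *m b.
    by rewrite -HXB mulmxA -(mulmxA _ B) HBb HaX mul_delta_mx.
  by apply: memA_mul => //; apply: memA_mul.
apply/eqP; rewrite eqEsubv subvf /=; apply/subvP => M _.
rewrite (matrix_sum_delta M); apply: memv_suml => i _; apply: memv_suml => j _.
by rewrite memvZ.
Qed.

End Burnside.


Section Onb.
Variables (C : numClosedFieldType) (n : nat).

Lemma adjmxK m k (M : 'M[C]_(m, k)) : adjmx (adjmx M) = M.
Proof. by apply/matrixP => i j; rewrite !mxE conjCK. Qed.

Lemma mx11_entry (M N : 'M[C]_1) : (M *m N) 0 0 = M 0 0 * N 0 0.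
Proof. by rewrite mxE big_ord1. Qed.

Variable v : 'I_n -> 'cV[C]_n.
Hypothesis onb : orthonormal_basis v.

Lemma onb_complete : \sum_k v k *m adjmx (v k) = 1%:M.
Proof.
pose V := \matrix_(i, j) v j i 0.
have H1 : adjmx V *m V = 1%:M.
  apply/matrixP => i j; have := onb i j; move/matrixP/(_ 0 0).
  rewrite !mxE eqxx mulr1n => <-; apply: eq_bigr => k _; rewrite !mxE //.
have H2 := mulmx1C H1.
rewrite -H2; apply/matrixP => a b; rewrite summxE !mxE; apply: eq_bigr => k _.
by rewrite !mxE big_ord1 !mxE.
Qed.

Lemma braket_mul M N j i :
  braket v (M *m N) j i = \sum_k braket v M j k * braket v N k i.
Proof.
have -> : M *m N = \sum_k M *m (v k *m adjmx (v k)) *m N.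
  by rewrite -mulmx_suml -mulmx_sumr onb_complete mulmx1.
rewrite /braket mulmx_sumr mulmx_suml summxE; apply: eq_bigr => k _.
rewrite -mx11_entry; congr (_ 0 0).
by rewrite !mulmxA.
Qed.

Lemma braketD M N j i : braket v (M + N) j i = braket v M j i + braket v N j i.
Proof. by rewrite /braket mulmxDr mulmxDl mxE. Qed.

Lemma braketZ c M j i : braket v (c *: M) j i = c * braket v M j i.
Proof. by rewrite /braket -scalemxAr -scalemxAl mxE. Qed.

Lemma braket0 j i : braket v 0 j i = 0.
Proof. by rewrite /braket mulmx0 mul0mx mxE. Qed.

End Onb.

Lemma prodv_ind (K : fieldType) (aT : falgType K) (U V : {vspace aT}) (P : aT -> Prop) :
  P 0 -> (forall x y, P x -> P y -> P (x + y)) -> (forall c x, P x -> P (c *: x)) ->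
  (forall u v, u \in U -> v \in V -> P (u * v)) -> forall w, w \in (U * V)%VS -> P w.
Proof.
move=> P0 PD PZ Puv w; rewrite unlock => /coord_span ->.
apply: (big_ind P) => // i _; apply: PZ.
have Hi : (i < size (allpairs *%R (vbasis U) (vbasis V)))%N.
  by rewrite size_allpairs !size_tuple.
have /allpairsP[[u v] /= [Hu Hv ->]] := mem_nth 0 Hi.
by apply: Puv; apply: vbasis_mem.
Qed.

Lemma forward (C : numClosedFieldType) n (S : {vspace 'M[C]_n.+1}) :
  qconnected S -> forall v, orthonormal_basis v -> graph_connected (conf_adj S v).
Proof.
move=> [m [m0 Sm]] v onb x y; apply: NNPP => Hxy.
pose P j := clos_refl_trans _ (conf_adj S v) x j.
pose T M := forall j i, P j -> ~ P i -> braket v M j i = 0.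
have TS : forall M, M \in S -> T M.
  move=> M MS j i Pj Pi; apply: NNPP => nz; apply: (Pi).
  eapply rt_trans; [exact: Pj | apply: rt_step]; split; last by exists M.
  by move=> eji; apply: Pi; rewrite -eji.
have Tmul : forall M N, T M -> T N -> T (M *m N).
  move=> M N TM TN j i Pj Pi; rewrite braket_mul // big1 // => k _.
  case: (classic (P k)) => Pk; first by rewrite (TN k i Pk Pi) mulr0.
  by rewrite (TM j k Pj Pk) mul0r.
have Tk : forall k, (forall M, M \in (S ^+ k.+1)%VS -> T M).
  elim=> [|k IH] M; first by rewrite expv1; exact: TS.
  rewrite expvSr; apply: prodv_ind.
  - by move=> j i _ _; exact: braket0.
  - by move=> A B TA TB j i Pj Pi; rewrite braketD TA ?TB ?addr0.
  - by move=> c A TA j i Pj Pi; rewrite braketZ TA ?mulr0.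
  - by move=> A B HA HB; rewrite -mulmxE; apply: Tmul; [apply: IH | apply: TS].
have : T (v x *m adjmx (v y)).
  by case: m m0 Sm => // m _ Sm; apply: (Tk m); rewrite Sm memvf.
move/(_ x y (rt_refl _ _ _) Hxy); rewrite /braket !mulmxA onb eqxx mul1mx onb eqxx.
by rewrite mxE eqxx mulr1n => /eqP; rewrite oner_eq0.
Qed.


Lemma adjmxK' (C : numClosedFieldType) m k (M : 'M[C]_(m, k)) : adjmx (adjmx M) = M.
Proof. by apply/matrixP => i j; rewrite !mxE conjCK. Qed.

Lemma adjmx_mul (C : numClosedFieldType) m k p (M : 'M[C]_(m, k)) (N : 'M[C]_(k, p)) :
  adjmx (M *m N) = adjmx N *m adjmx M.
Proof. by rewrite /adjmx map_mxM trmx_mul. Qed.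

Lemma row_col_mx_sub (C : numClosedFieldType) r1 r2 k (X : 'M[C]_(r1, k)) (Y : 'M[C]_(r2, k))
   (i : 'I_(r1 + r2)) :
  if (i < r1)%N then (row i (col_mx X Y) <= X)%MS else (row i (col_mx X Y) <= Y)%MS.
Proof.
case: splitP => j Hj.
  have -> : i = lshift r2 j by apply: val_inj.
  by rewrite rowKu row_sub.
have -> : i = rshift r1 j by apply: val_inj.
by rewrite rowKd row_sub.
Qed.

Lemma adapted_onb (C : numClosedFieldType) n m (U : 'M[C]_(m, n.+1)) :
  U != 0 -> ~~ row_full U ->
  exists v : 'I_n.+1 -> 'cV[C]_n.+1, exists i0 i1 : 'I_n.+1, exists Q : pred 'I_n.+1,
   [/\ orthonormal_basis v, Q i0, ~~ Q i1, (forall i, Q i -> (adjmx (v i) <= U)%MS)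
     & (forall j, ~~ Q j -> forall x : 'rV_n.+1, (x <= U)%MS -> x *m v j = 0)].
Proof.
move=> U0 Unf.
set Uo := orthomx Num.Def.conjC (hermitian1mx n.+1) U.
have E : (\rank U + \rank Uo = n.+1)%N := add_rank_ortho U.
set SC := schmidt_complete U.
have SCu : SC \is unitarymx := schmidt_complete_unitarymx U.
pose c i := cast_ord (esym E) i.
pose v i := adjmx (row (c i) SC).
have r0 : (0 < \rank U)%N by rewrite lt0n mxrank_eq0.
have r1 : (\rank U <= n)%N.
  by move: Unf; rewrite /row_full -ltnS ltn_neqAle rank_leq_col andbT.
exists v, ord0, ord_max, (fun i : 'I_n.+1 => (i < \rank U)%N); split => //=.
- move=> i j; rewrite /v adjmxK'; apply/matrixP => a b; rewrite !ord1.
  have := unitarymxP SCu; move/matrixP/(_ (c i) (c j)).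
  rewrite !mxE (inj_eq (@cast_ord_inj _ _ _)) eqxx mulr1n => <-.
  by apply: eq_bigr => k _; rewrite !mxE.
- by rewrite -ltnNge ltnS.
- move=> i Hi; rewrite /v adjmxK'.
  have := @row_col_mx_sub C _ _ _ (schmidt (row_base U)) (schmidt (row_base Uo)) (c i).
  rewrite /= Hi => H; apply: (submx_trans H).
  by rewrite (eqmx_schmidt_free (row_base_free U)) eq_row_base.
- move=> j Hj x xU.
  have := @row_col_mx_sub C _ _ _ (schmidt (row_base U)) (schmidt (row_base Uo)) (c j).
  rewrite /= (negbTE Hj) => H.
  have yo : (row (c j) SC <= orthomx Num.Def.conjC (hermitian1mx n.+1) x)%MS.
    apply: (submx_trans H).
    rewrite (eqmx_schmidt_free (row_base_free Uo)) eq_row_base.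
    by rewrite submx_ortho.
  have /orthomx1P H0 := yo.
  rewrite /v -[x]adjmxK' -adjmx_mul.
  have -> : adjmx x = (x ^t Num.Def.conjC)%sesqui by rewrite /adjmx map_trmx.
  by rewrite H0; apply/matrixP => a b; rewrite !mxE conjC0.
Qed.

Lemma backward (C : numClosedFieldType) n (S : {vspace 'M[C]_n.+1}) :
  quantum_graph S ->
  (forall v, orthonormal_basis v -> graph_connected (conf_adj S v)) -> qconnected S.
Proof.
move=> [S1 _] Hc.
have S1' : (1%VS <= S)%VS by rewrite -memvE.
have chain : forall k, (S ^+ k.+1 <= S ^+ k.+2)%VS.
  move=> k; rewrite [X in (_ <= X)%VS]expvSr.
  rewrite -{1}[(S ^+ k.+1)%VS]prodv1; exact: prodvSr S1'.
have [k Hk] : exists k, (S ^+ k.+2 = S ^+ k.+1)%VS.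
  apply: NNPP => H.
  have dimgrow : forall k, (k.+1 <= \dim (S ^+ k.+1))%N.
    elim=> [|k IH].
      rewrite expv1; apply: leq_trans (dimvS S1'); rewrite dim_vline.
      by rewrite oner_eq0.
    apply: leq_ltn_trans IH _; rewrite ltn_neqAle dimvS ?chain // andbT.
    apply/negP => /eqP Hd; apply: H; exists k; apply/eqP.
    by rewrite eq_sym eqEdim chain Hd leqnn.
  have := dimgrow (\dim (fullv : {vspace 'M[C]_n.+1})).
  by rewrite leqNgt ltnS dimvS ?subvf.
set A := (S ^+ k.+1)%VS.
have AS : (A * S)%VS = A by rewrite /A -expvSr Hk.
have ASj : forall j, (A * S ^+ j)%VS = A.
  elim => [|j IH]; first by rewrite expv0 prodv1.
  by rewrite expvSr prodvA IH AS.
have AA : (A * A <= A)%VS.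
  by have := subvv A; rewrite -{1}(ASj k.+1).
have A1 : 1 \in A by rewrite /A memvE -(expv1n _ k.+1) expvS.
have SA : forall j, (S <= S ^+ j.+1)%VS.
  elim => [|j IH]; first by rewrite expv1.
  exact: subv_trans IH (chain j).
case: (classic (A = fullv)) => [Af|Anf]; first by exists k.+1.
have : ~ (forall m (U : 'M[C]_(m, n.+1)),
            (forall a, a \in A -> stablemx U a) -> U = 0 \/ row_full U).
  by move=> irr; apply: Anf; apply: burnside A1 AA irr.
move=> Hn; have [m Hm] := not_all_ex_not _ _ Hn.
have [U HU] := not_all_ex_not _ _ Hm.
have [stab HU2] := imply_to_and _ _ HU.
have [U0 Unf] := not_or_and _ _ HU2.
have U0' : U != 0 by apply/eqP.
have Unf' : ~~ row_full U by apply/negP.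
have [v [i0 [i1 [Q [onb Qi0 Qi1 HQ HnQ]]]]] := @adapted_onb C n m U U0' Unf'.
have conn := Hc v onb i0 i1.
suff : forall x y, clos_refl_trans _ (conf_adj S v) x y -> Q x -> Q y.
  by move/(_ _ _ conn Qi0); rewrite (negbTE Qi1).
move=> x y; elim => {x y conn} [x y [_ [s [sS nz]]] Qx | x //| x y z _ IH1 _ IH2 Qx].
  apply/negPn/negP => nQy; apply: nz.
  have sU : (adjmx (v x) *m s <= U)%MS.
    exact: submx_trans (submxMr s (HQ x Qx)) (stab s (subvP (SA k) s sS)).
  by rewrite /braket (HnQ y nQy _ sU) mxE.
by apply: IH2; apply: IH1.
Qed.

Theorem proposition3p6 (R : realType) (n : nat) (S : {vspace 'M[R[i]]_n.+1}) :
  quantum_graph S ->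
  (qconnected S <->
   forall v : 'I_n.+1 -> 'cV[R[i]]_n.+1,
     orthonormal_basis v -> graph_connected (conf_adj S v)).
Proof.
move=> QS; split; first exact: forward.
exact: backward.
Qed.
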